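(* Let $v_1,v_2\in L_2(0,1)$, $\alpha\in[0,2\pi)$ and $v=v_1+e^{i\alpha}v_2$. For $w_1,w_2\in L_2(0,1)$ let $A(w_1,w_2,\alpha)$ denote the operator in $L_2(0,1)$ acting by $$A(w_1,w_2,\alpha)\psi(x)=i\psi'(x)+w_1(x)\Big[\psi(0)-\tfrac{i}{2}\langle\psi,w_1\rangle\Big]+w_2(x)\Big[\psi(1)+\tfrac{i}{2}\langle\psi,w_2\rangle\Big]$$ on the domain of $\psi\in W_2^1(0,1)$ with $\psi(1)+i\langle\psi,w_2\rangle=e^{i\alpha}[\psi(0)-i\langle\psi,w_1\rangle]$. Then $A(v_1,v_2,\alpha)$ and $A(v,0,\alpha)$ have the same domain (the domain of the latter being given by $\psi(1)=e^{i\alpha}[\psi(0)-i\langle\psi,v\rangle]$), and their difference is the bounded self-adjoint operator of rank at most $2$ $$\big[A(v_1,v_2,\alpha)-A(v,0,\alpha)\big]\psi=\tfrac{i}{2}e^{-i\alpha}v_1\langle\psi,v_2\rangle-\tfrac{i}{2}e^{i\alpha}v_2\langle\psi,v_1\rangle.$$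
   Context: $\langle f,g\rangle=\int_0^1 f\bar g\,dx$; $W_2^1(0,1)$ is the Sobolev space. *)

(* Defs.v *)
From HB Require Import structures.
From mathcomp Require Import all_boot all_order all_algebra.
From mathcomp Require Import all_classical all_reals all_analysis.
From mathcomp Require Import complex.
Set Implicit Arguments. Unset Strict Implicit. Unset Printing Implicit Defensive.
Import Order.TTheory GRing.Theory Num.Theory.
Import numFieldNormedType.Exports.
Local Open Scope classical_set_scope.
Local Open Scope ring_scope.

Section Defs.
Variable R : realType.
Local Notation C := R[i].
Local Notation mu := (@lebesgue_measure R).

(* the interval [0,1] (endpoints are a null set, so = (0,1) for L_2) *)
Definition I01 : set R := `[0%R, 1%R].

Definition L2 (f : R -> C) : Prop :=
  [/\ measurable_fun I01 (fun x => complex.Re (f x)),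
      measurable_fun I01 (fun x => complex.Im (f x)) &
      mu.-integrable I01
        (fun x => ((complex.Re (f x)) ^+ 2 + (complex.Im (f x)) ^+ 2)%:E)].

Definition cint (D : set R) (f : R -> C) : C :=
  Complex (Rintegral mu D (fun x => complex.Re (f x)))
          (Rintegral mu D (fun x => complex.Im (f x))).

Definition ip (f g : R -> C) : C := cint I01 (fun x => f x * conjc (g x)).

Definition l2norm (f : R -> C) : R := Num.sqrt (complex.Re (ip f f)).

(* psi \in W_2^1(0,1) with (weak) derivative phi \in L_2(0,1):
   psi is absolutely continuous, psi(x) = psi(0) + int_0^x phi *)
Definition W21 (psi phi : R -> C) : Prop :=
  L2 phi /\ forall x, x \in I01 -> psi x = psi 0 + cint `[0%R, x] phi.

Definition expi (a : R) : C := Complex (cos a) (sin a).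

Definition domA (w1 w2 : R -> C) (a : R) (psi : R -> C) : Prop :=
  psi 1 + 'i%C * ip psi w2 = expi a * (psi 0 - 'i%C * ip psi w1).

(* action of A(w1,w2,alpha) on psi, whose derivative is phi *)
Definition opA (w1 w2 : R -> C) (psi phi : R -> C) (x : R) : C :=
  'i%C * phi x
  + w1 x * (psi 0 - ('i%C / 2%:R) * ip psi w1)
  + w2 x * (psi 1 + ('i%C / 2%:R) * ip psi w2).

Definition opK (v1 v2 : R -> C) (a : R) (psi : R -> C) (x : R) : C :=
  ('i%C / 2%:R) * conjc (expi a) * v1 x * ip psi v2
  - ('i%C / 2%:R) * expi a * v2 x * ip psi v1.

End Defs.

(* Main.v *)
Require Import Defs.
From HB Require Import structures.
From mathcomp Require Import all_boot all_order all_algebra.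
From mathcomp Require Import all_classical all_reals all_analysis.
From mathcomp Require Import complex.
From mathcomp Require Import lra ring.
Import Order.TTheory GRing.Theory Num.Theory.
Import numFieldNormedType.Exports.
Local Open Scope classical_set_scope.
Local Open Scope ring_scope.
Set Implicit Arguments. Unset Strict Implicit. Unset Printing Implicit Defensive.
Section Aux.
Variable R : realType.
Local Notation C := R[i].
Local Notation Re := complex.Re.
Local Notation Im := complex.Im.
Local Notation mu := (@lebesgue_measure R).

Lemma ReD (x y : C) : Re (x + y) = Re x + Re y. Proof. by case: x; case: y. Qed.
Lemma ImD (x y : C) : Im (x + y) = Im x + Im y. Proof. by case: x; case: y. Qed.
Lemma ReN (x : C) : Re (- x) = - Re x. Proof. by case: x. Qed.
Lemma ImN (x : C) : Im (- x) = - Im x. Proof. by case: x. Qed.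
Lemma ReM (x y : C) : Re (x * y) = Re x * Re y - Im x * Im y. Proof. by case: x; case: y. Qed.
Lemma ImM (x y : C) : Im (x * y) = Re x * Im y + Im x * Re y. Proof. by case: x; case: y. Qed.
Lemma ReJ (x : C) : Re (conjc x) = Re x. Proof. by case: x. Qed.
Lemma ImJ (x : C) : Im (conjc x) = - Im x. Proof. by case: x. Qed.
Lemma Re0 : Re (0 : C) = 0. Proof. by []. Qed.
Lemma Im0 : Im (0 : C) = 0. Proof. by []. Qed.
Lemma cE (x y : C) : Re x = Re y -> Im x = Im y -> x = y.
Proof. by case: x; case: y => /= a b c d -> ->. Qed.

Definition nc (x : C) := Re x ^+ 2 + Im x ^+ 2.
Lemma nc_ge0 x : 0 <= nc x. Proof. rewrite /nc; nra. Qed.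
Lemma ncM x y : nc (x * y) = nc x * nc y.
Proof. rewrite /nc ReM ImM; ring. Qed.
Lemma ncD x y : nc (x + y) <= 2 * nc x + 2 * nc y.
Proof. rewrite /nc ReD ImD. have := sqr_ge0 (Re x - Re y). have := sqr_ge0 (Im x - Im y). nra. Qed.
Lemma ReMJ (x y : C) : Re (x * conjc y) = Re x * Re y + Im x * Im y.
Proof. rewrite ReM ReJ ImJ; ring. Qed.
Lemma ImMJ (x y : C) : Im (x * conjc y) = Im x * Re y - Re x * Im y.
Proof. rewrite ImM ReJ ImJ; ring. Qed.
Lemma i2E : ('i%C / 2%:R : C) = Complex 0 (2^-1).
Proof. by apply: cE; rewrite /=; field. Qed.
Lemma expiJ a : expi a * conjc (expi a) = 1 :> C.
Proof. apply: cE; rewrite ?ReMJ ?ImMJ /=; [rewrite -(cos2Dsin2 a)|]; ring. Qed.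

Lemma mI : measurable (@I01 R : set (measurableTypeR R)). Proof. exact: measurable_itv. Qed.
Definition RI (f : R -> R) := mu.-integrable (@I01 R) (EFin \o f).
Definition mf (f : R -> R) := measurable_fun (@I01 R) f.

Lemma RI_D f g : RI f -> RI g -> RI (fun x => f x + g x).
Proof.
move=> hf hg; apply: (eq_integrable mI _ _ _ (integrableD mI hf hg)).
by move=> x _ /=; rewrite EFinD.
Qed.
Lemma RI_Z k f : RI f -> RI (fun x => k * f x).
Proof.
move=> hf; apply: (eq_integrable mI _ _ _ (integrableZl mI k hf)).
by move=> x _ /=; rewrite EFinM.
Qed.
Lemma RI_B f g : RI f -> RI g -> RI (fun x => f x - g x).
Proof.
move=> hf hg; have := RI_D hf (RI_Z (-1) hg).
by apply: (eq_integrable mI) => x _ /=; rewrite mulN1r.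
Qed.
Lemma RI_le f g : mf f -> RI g -> (forall x, I01 x -> `|f x| <= g x) -> RI f.
Proof.
move=> mff hg hle; apply: (le_integrable mI _ _ hg).
  exact/measurable_realfun.measurable_EFinP.
move=> x Ix /=; rewrite lee_fin (le_trans (hle x Ix))//; exact: ler_norm.
Qed.

Lemma absprod (a b c d : R) : `|a * c + b * d| <= (a ^+ 2 + b ^+ 2) + (c ^+ 2 + d ^+ 2).
Proof.
have := sqr_ge0 (a - c); have := sqr_ge0 (b - d); have := sqr_ge0 (a + c); have := sqr_ge0 (b + d).
move=> h1 h2 h3 h4; apply/ler_normlP; split; nra.
Qed.

Definition cI (h : R -> C) := RI (fun x => Re (h x)) /\ RI (fun x => Im (h x)).

Lemma L2_prod f g : L2 f -> L2 g -> cI (fun x => f x * conjc (g x)).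
Proof.
move=> [mf1 mf2 if3] [mg1 mg2 ig3].
have hi : RI (fun x => nc (f x) + nc (g x)) by exact: RI_D.
split.
- apply: (RI_le _ hi).
  + apply: (eq_measurable_fun (fun x => Re (f x) * Re (g x) + Im (f x) * Im (g x))).
      by move=> x _; rewrite ReMJ.
    by apply: measurable_realfun.measurable_funD; apply: measurable_realfun.measurable_funM.
  + move=> x _; rewrite ReMJ /nc; exact: absprod.
- apply: (RI_le _ hi).
  + apply: (eq_measurable_fun (fun x => Im (f x) * Re (g x) - Re (f x) * Im (g x))).
      by move=> x _; rewrite ImMJ.
    by apply: measurable_realfun.measurable_funB; apply: measurable_realfun.measurable_funM.
  + move=> x _; rewrite ImMJ /nc.
    have := absprod (Im (f x)) (- Re (f x)) (Re (g x)) (Im (g x)).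
    rewrite sqrrN mulNr => h; lra.
Qed.

Lemma cint_ext (h1 h2 : R -> C) : (forall x, I01 x -> h1 x = h2 x) -> cint (@I01 R) h1 = cint (@I01 R) h2.
Proof.
move=> e; rewrite /cint; congr Complex; apply: eq_Rintegral => x /set_mem Ix; by rewrite e.
Qed.

Lemma cI_D (h1 h2 : R -> C) : cI h1 -> cI h2 -> cI (fun x => h1 x + h2 x).
Proof.
move=> [a b] [c d]; split.
- by apply: (eq_integrable mI _ _ _ (RI_D a c)) => x _ /=; rewrite ReD.
- by apply: (eq_integrable mI _ _ _ (RI_D b d)) => x _ /=; rewrite ImD.
Qed.

Lemma cI_Z (c : C) (h : R -> C) : cI h -> cI (fun x => c * h x).
Proof.
move=> [a b]; split.
- by apply: (eq_integrable mI _ _ _ (RI_B (RI_Z (Re c) a) (RI_Z (Im c) b))) => x _ /=; rewrite ReM.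
- by apply: (eq_integrable mI _ _ _ (RI_D (RI_Z (Re c) b) (RI_Z (Im c) a))) => x _ /=; rewrite ImM.
Qed.

Lemma cintD (h1 h2 : R -> C) : cI h1 -> cI h2 ->
  cint (@I01 R) (fun x => h1 x + h2 x) = cint (@I01 R) h1 + cint (@I01 R) h2.
Proof.
move=> [a b] [c d]; apply: cE; rewrite /cint ?ReD ?ImD /=.
- rewrite -RintegralD//; last exact: mI.
  by apply: eq_Rintegral => x _; rewrite ReD.
- rewrite -RintegralD//; last exact: mI.
  by apply: eq_Rintegral => x _; rewrite ImD.
Qed.

Lemma cintZ (c : C) (h : R -> C) : cI h -> cint (@I01 R) (fun x => c * h x) = c * cint (@I01 R) h.
Proof.
move=> [a b]; apply: cE; rewrite /cint ?ReM ?ImM /=.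
- rewrite -!RintegralZl; try exact: mI; try done.
  rewrite -RintegralB; try exact: mI; try exact: RI_Z.
  by apply: eq_Rintegral => x _; rewrite ReM.
- rewrite -!RintegralZl; try exact: mI; try done.
  rewrite -RintegralD; try exact: mI; try exact: RI_Z.
  by apply: eq_Rintegral => x _; rewrite ImM.
Qed.

Lemma ipDr (f g1 g2 : R -> C) (c : C) : L2 f -> L2 g1 -> L2 g2 ->
  ip f (fun x => g1 x + c * g2 x) = ip f g1 + conjc c * ip f g2.
Proof.
move=> hf h1 h2; rewrite /ip.
rewrite (@cint_ext _ (fun x => f x * conjc (g1 x) + conjc c * (f x * conjc (g2 x)))); last first.
  by move=> x _; rewrite rmorphD rmorphM; ring.
rewrite cintD ?cintZ //; [exact: L2_prod | exact: L2_prod | apply: cI_Z; exact: L2_prod].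
Qed.

Lemma ipDl (g1 g2 h : R -> C) (c1 c2 : C) : L2 g1 -> L2 g2 -> L2 h ->
  ip (fun x => c1 * g1 x + c2 * g2 x) h = c1 * ip g1 h + c2 * ip g2 h.
Proof.
move=> h1 h2 hh; rewrite /ip.
rewrite (@cint_ext _ (fun x => c1 * (g1 x * conjc (h x)) + c2 * (g2 x * conjc (h x)))); last first.
  by move=> x _; ring.
rewrite cintD ?cintZ //; [exact: L2_prod | exact: L2_prod | apply: cI_Z; exact: L2_prod..].
Qed.

Lemma ip_conj (f g : R -> C) : L2 f -> L2 g -> conjc (ip f g) = ip g f.
Proof.
move=> hf hg; have [a b] := L2_prod hf hg.
apply: cE; rewrite /ip /cint ?ReJ ?ImJ /=.
- by apply: eq_Rintegral => x _; rewrite !ReMJ; ring.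
- rewrite -mulN1r -RintegralZl//; last exact: mI.
  by apply: eq_Rintegral => x _; rewrite !ImMJ; ring.
Qed.

Lemma ip0 (f : R -> C) : ip f (fun _ => 0) = 0.
Proof.
apply: cE; rewrite /ip /cint /=.
- rewrite (@eq_Rintegral _ _ _ _ _ (fun _ => 0)); last by move=> x _ /=; case: (f x) => a b /=; ring.
  by rewrite Rintegral_cst ?mul0r //; exact: mI.
- rewrite (@eq_Rintegral _ _ _ _ _ (fun _ => 0)); last by move=> x _ /=; case: (f x) => a b /=; ring.
  by rewrite Rintegral_cst ?mul0r //; exact: mI.
Qed.

Lemma cs_real (x A B : R) : 0 <= A -> 0 <= B ->
  (forall t, 0 < t -> 2 * t * `|x| <= t ^+ 2 * A + B) -> x ^+ 2 <= A * B.
Proof.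
move=> A0 B0 h.
have xE : x ^+ 2 = `|x| ^+ 2 by rewrite -normrX ger0_norm ?sqr_ge0.
have [->|xn0] := eqVneq x 0; first by rewrite expr0n /= mulr_ge0.
have xp : 0 < `|x| by rewrite normr_gt0.
rewrite le_eqVlt in A0; case/orP: A0 => [/eqP A0|Ap].
- have := h ((B + 1) / `|x|) (divr_gt0 (ltr_pwDr ltr01 B0) xp).
  rewrite -A0 mulr0 add0r -mulrA divfK ?normr_eq0 //. lra.
- have := h (`|x| / A) (divr_gt0 xp Ap).
  set u := `|x| / A.
  have xu : `|x| = u * A by rewrite /u -mulrA mulVf ?mulr1 // gt_eqF.
  rewrite xE xu => hu.
  have up : 0 < u by rewrite /u divr_gt0.
  nra.
Qed.

Lemma pw (a b c d t : R) : 0 < t ->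
  2 * t * `|a * c + b * d| <= t ^+ 2 * (a ^+ 2 + b ^+ 2) + (c ^+ 2 + d ^+ 2).
Proof.
move=> t0.
have := sqr_ge0 (t * a - c); have := sqr_ge0 (t * b - d).
have := sqr_ge0 (t * a + c); have := sqr_ge0 (t * b + d).
have [y0|y0] := leP 0 (a * c + b * d).
- rewrite ger0_norm //; nra.
- rewrite ltr0_norm //; nra.
Qed.

Definition Nt (f : R -> C) := Rintegral mu (@I01 R) (fun x => nc (f x)).

Lemma cs_part (h : R -> R) (f g : R -> C) : L2 f -> L2 g -> RI h ->
  (forall t x, 0 < t -> 2 * t * `|h x| <= t ^+ 2 * nc (f x) + nc (g x)) ->
  (Rintegral mu (@I01 R) h) ^+ 2 <= Nt f * Nt g.
Proof.
move=> [_ _ hf] [_ _ hg] hh hp.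
apply: cs_real; [apply: Rintegral_ge0 => x _; exact: nc_ge0..|].
move=> t t0.
apply: (@le_trans _ _ (2 * t * Rintegral mu (@I01 R) (fun x => `|h x|))).
  apply: ler_wpM2l; first by rewrite mulr_ge0 ?ltW.
  exact: le_normr_Rintegral mI hh.
rewrite -RintegralZl; [|exact: mI|exact: integrable_norm].
rewrite /Nt -RintegralZl; [|exact: mI|exact: hf].
rewrite -RintegralD; [|exact: mI|exact: RI_Z|exact: hg].
apply: le_Rintegral; [exact: mI| | |].
- apply: RI_Z; exact: integrable_norm.
- apply: RI_D; [exact: RI_Z|exact: hg].
- by move=> x _; exact: hp.
Qed.

Lemma ip_cs (f g : R -> C) : L2 f -> L2 g -> nc (ip f g) <= 2 * (Nt f * Nt g).
Proof.
move=> hf hg; have [a b] := L2_prod hf hg.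
rewrite /nc /ip /cint /= mulr2n mulrDl mul1r.
apply: lerD.
- apply: cs_part => // t x t0; rewrite ReMJ; exact: pw.
- apply: cs_part => // t x t0; rewrite ImMJ.
  have := pw (Im (f x)) (- Re (f x)) (Re (g x)) (Im (g x)) t0.
  by rewrite sqrrN mulNr /nc addrC [Im _ ^+ 2 + _]addrC.
Qed.

Lemma muI : (mu (@I01 R) < +oo)%E.
Proof. by rewrite /I01 lebesgue_measure_itv /=; case: ifP => _; rewrite ?oppr0 ?adde0 ?ltry. Qed.


Lemma RI_bounded (f : R -> R) (M : R) : mf f -> (forall x, I01 x -> `|f x| <= M) -> RI f.
Proof.
move=> mff hM; apply: measurable_bounded_integrable => //; first exact: mI.
  exact muI.
rewrite /bounded_near; near=> M0 => x Ax /=.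
apply: le_trans (hM x Ax) _; near: M0; exact: nbhs_pinfty_ge (num_real M).
Unshelve. all: by end_near.
Qed.

Lemma mf_nc (h : R -> C) : mf (fun x => Re (h x)) -> mf (fun x => Im (h x)) ->
  mf (fun x => nc (h x)).
Proof.
move=> m1 m2; apply: (eq_measurable_fun (fun x => Re (h x) * Re (h x) + Im (h x) * Im (h x))).
  by move=> x _; rewrite /nc !expr2.
by apply: measurable_realfun.measurable_funD; apply: measurable_realfun.measurable_funM.
Qed.

Lemma RI_cst (k : R) : RI (fun _ => k).
Proof. apply: (@RI_bounded _ `|k|) => //; exact: measurable_cst. Qed.

Lemma L2_RI_Re (phi : R -> C) : L2 phi -> RI (fun x => Re (phi x)).
Proof.
move=> [m1 m2 i3]; apply: (RI_le m1 (RI_D (RI_cst 1) i3)) => x _.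
have := sqr_ge0 (Im (phi x)); have := sqr_ge0 (`|Re (phi x)| - 1).
rewrite -[Re (phi x) ^+ 2]real_normK ?num_real //; nra.
Qed.

Lemma L2_RI_Im (phi : R -> C) : L2 phi -> RI (fun x => Im (phi x)).
Proof.
move=> [m1 m2 i3]; apply: (RI_le m2 (RI_D (RI_cst 1) i3)) => x _.
have := sqr_ge0 (Re (phi x)); have := sqr_ge0 (`|Im (phi x)| - 1).
rewrite -[Im (phi x) ^+ 2]real_normK ?num_real //; nra.
Qed.

Lemma int_meas (g : R -> R) : RI g -> mf (fun x => Rintegral mu `[0, x] g).
Proof.
move=> hg; apply: measurable_realfun.subspace_continuous_measurable_fun; first exact: mI.
exact: (@parameterized_integral_continuous _ 0 1 g ler01 hg).
Qed.

Lemma int_bound (g : R -> R) x : RI g -> I01 x ->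
  `|Rintegral mu `[0, x] g| <= Rintegral mu (@I01 R) (fun y => `|g y|).
Proof.
move=> hg Ix.
have x1 : x <= 1 by move: Ix; rewrite /I01 /= in_itv /= => /andP[].
have sub : `[0, x] `<=` (@I01 R) by apply: subset_itvl; rewrite bnd_simp.
have mx : measurable (`[0, x] : set (measurableTypeR R)) by exact: measurable_itv.
have hgx : mu.-integrable `[0, x] (EFin \o g) by exact: integrableS mI mx sub hg.
apply: le_trans (le_normr_Rintegral mx hgx) _.
have n1 := integrable_norm hgx; have n2 := integrable_norm hg.
apply: fine_le; [exact: integrable_fin_num mx _ n1|exact: integrable_fin_num mI _ n2|].
apply: ge0_subset_integral => //; first exact: mI.
by case/integrableP: n2.
Qed.

Lemma sq_le (a M : R) : `|a| <= M -> a ^+ 2 <= M ^+ 2.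
Proof.
move=> h; rewrite -[a ^+ 2]real_normK ?num_real //.
have := normr_ge0 a; nra.
Qed.

Lemma W21_L2 (psi phi : R -> C) : W21 psi phi -> L2 psi.
Proof.
move=> [hphi hpsi].
have r1 := L2_RI_Re hphi; have r2 := L2_RI_Im hphi.
have eRe : forall x, I01 x -> Re (psi x) = Re (psi 0) + Rintegral mu `[0, x] (fun y => Re (phi y)).
  by move=> x Ix; rewrite hpsi ?inE // ReD.
have eIm : forall x, I01 x -> Im (psi x) = Im (psi 0) + Rintegral mu `[0, x] (fun y => Im (phi y)).
  by move=> x Ix; rewrite hpsi ?inE // ImD.
have mRe : mf (fun x => Re (psi x)).
  have h := (@eq_measurable_fun _ _ _ _ (@I01 R) (fun x : R => Re (psi 0) + Rintegral mu `[0, x] (fun y => Re (phi y))) (fun x => Re (psi x))).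
  apply: h.
    by move=> x xI /=; rewrite (eRe x) //; apply/set_mem.
  apply: measurable_realfun.measurable_funD; [exact: measurable_cst|exact: int_meas].
have mIm : mf (fun x => Im (psi x)).
  have h := (@eq_measurable_fun _ _ _ _ (@I01 R) (fun x : R => Im (psi 0) + Rintegral mu `[0, x] (fun y => Im (phi y))) (fun x => Im (psi x))).
  apply: h.
    by move=> x xI /=; rewrite (eIm x) //; apply/set_mem.
  apply: measurable_realfun.measurable_funD; [exact: measurable_cst|exact: int_meas].
split => //.
set M1 := `|Re (psi 0)| + Rintegral mu (@I01 R) (fun y => `|Re (phi y)|).
set M2 := `|Im (psi 0)| + Rintegral mu (@I01 R) (fun y => `|Im (phi y)|).
apply: (@RI_bounded _ (M1 ^+ 2 + M2 ^+ 2)); first exact: mf_nc.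
move=> x Ix; rewrite ger0_norm ?nc_ge0 // /nc.
apply: lerD; apply: sq_le.
- rewrite eRe //; apply: le_trans (ler_normD _ _) _; apply: lerD => //; exact: int_bound.
- rewrite eIm //; apply: le_trans (ler_normD _ _) _; apply: lerD => //; exact: int_bound.
Qed.

Lemma mf_Z (c : C) (g : R -> C) : L2 g ->
  mf (fun x => Re (c * g x)) /\ mf (fun x => Im (c * g x)).
Proof.
move=> [m1 m2 _]; split.
- apply: (eq_measurable_fun (fun x => Re c * Re (g x) - Im c * Im (g x))).
    by move=> x _; rewrite ReM.
  by apply: measurable_realfun.measurable_funB; apply: measurable_realfun.measurable_funM => //;
    exact: measurable_cst.
- apply: (eq_measurable_fun (fun x => Re c * Im (g x) + Im c * Re (g x))).
    by move=> x _; rewrite ImM.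
  by apply: measurable_realfun.measurable_funD; apply: measurable_realfun.measurable_funM => //;
    exact: measurable_cst.
Qed.

Lemma L2_lin (c1 c2 : C) (g1 g2 : R -> C) : L2 g1 -> L2 g2 ->
  L2 (fun x => c1 * g1 x + c2 * g2 x) /\
  Nt (fun x => c1 * g1 x + c2 * g2 x) <= 2 * nc c1 * Nt g1 + 2 * nc c2 * Nt g2.
Proof.
move=> h1 h2; have [a1 b1] := mf_Z c1 h1; have [a2 b2] := mf_Z c2 h2.
have [_ _ i1] := h1; have [_ _ i2] := h2.
have mre : mf (fun x => Re (c1 * g1 x + c2 * g2 x)).
  apply: (eq_measurable_fun (fun x => Re (c1 * g1 x) + Re (c2 * g2 x))).
    by move=> x _; rewrite ReD.
  exact: measurable_realfun.measurable_funD.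
have mim : mf (fun x => Im (c1 * g1 x + c2 * g2 x)).
  apply: (eq_measurable_fun (fun x => Im (c1 * g1 x) + Im (c2 * g2 x))).
    by move=> x _; rewrite ImD.
  exact: measurable_realfun.measurable_funD.
have hb : RI (fun x => 2 * nc c1 * nc (g1 x) + 2 * nc c2 * nc (g2 x)) by apply: RI_D; apply: RI_Z.
have hle : forall x, I01 x -> nc (c1 * g1 x + c2 * g2 x) <= 2 * nc c1 * nc (g1 x) + 2 * nc c2 * nc (g2 x).
  by move=> x _; apply: le_trans (ncD _ _) _; rewrite !ncM !mulrA.
have hn : RI (fun x => nc (c1 * g1 x + c2 * g2 x)).
  apply: (RI_le (mf_nc mre mim) hb) => x Ix; rewrite ger0_norm ?nc_ge0 //; exact: hle.
split; first by split.
have eR : Rintegral mu (@I01 R) (fun x => 2 * nc c1 * nc (g1 x) + 2 * nc c2 * nc (g2 x))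
    = 2 * nc c1 * Nt g1 + 2 * nc c2 * Nt g2.
  rewrite RintegralD; [|exact: mI|exact: RI_Z|exact: RI_Z].
  by rewrite !RintegralZl //; exact: mI.
rewrite -eR; apply: le_Rintegral => //; exact: mI.
Qed.

Lemma cjD (x y : C) : conjc (x + y) = conjc x + conjc y.
Proof. by apply: cE; rewrite ?ReJ ?ImJ ?ReD ?ImD ?ReJ ?ImJ //; ring. Qed.
Lemma cjM (x y : C) : conjc (x * y) = conjc x * conjc y.
Proof. by apply: cE; rewrite ?ReJ ?ImJ ?ReM ?ImM ?ReJ ?ImJ //; ring. Qed.

Lemma ipDr2 (f g1 g2 : R -> C) (c1 c2 : C) : L2 f -> L2 g1 -> L2 g2 ->
  ip f (fun x => c1 * g1 x + c2 * g2 x) = conjc c1 * ip f g1 + conjc c2 * ip f g2.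
Proof.
move=> hf h1 h2; have [hG _] := L2_lin c1 c2 h1 h2.
rewrite -ip_conj // ipDl // cjD !cjM !ip_conj //.
Qed.

Lemma conj_i2 : conjc ('i%C / 2%:R : C) = - ('i%C / 2%:R).
Proof. by rewrite i2E; apply: cE => /=; rewrite ?oppr0. Qed.

Lemma nc_i2 : nc ('i%C / 2%:R : C) = 4^-1.
Proof. by rewrite i2E /nc /=; field. Qed.

Lemma nc_J (x : C) : nc (conjc x) = nc x.
Proof. by rewrite /nc ReJ ImJ sqrrN. Qed.

Lemma nc_expi a : nc (expi a) = 1.
Proof. by rewrite /nc /= cos2Dsin2. Qed.

Lemma Nt_ip (f : R -> C) : Re (ip f f) = Nt f.
Proof. by rewrite /ip /cint /Nt /=; apply: eq_Rintegral => x _; rewrite ReMJ /nc !expr2. Qed.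

Lemma Nt_ge0 (f : R -> C) : 0 <= Nt f.
Proof. by apply: Rintegral_ge0 => x _; exact: nc_ge0. Qed.

Lemma cj_i : conjc ('i%C : C) = - 'i%C.
Proof. by apply: cE => /=; rewrite ?oppr0. Qed.
Lemma cj_2 : conjc ((2%:R)^-1 : C) = (2%:R)^-1.
Proof. by apply: cE => //=; rewrite !addr0 !mul0r !oppr0. Qed.
Lemma ncN (x : C) : nc (- x) = nc x.
Proof. by rewrite /nc ReN ImN !sqrrN. Qed.
Lemma cjN (x : C) : conjc (- x) = - conjc x.
Proof. by apply: cE; rewrite ?ReJ ?ImJ ?ReN ?ImN ?ReJ ?ImJ. Qed.
End Aux.

Theorem theorem5p2 (R : realType) (v1 v2 : R -> R[i]) (a : R) :
  L2 v1 -> L2 v2 -> 0 <= a < 2 * pi ->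
  let v := fun x => v1 x + expi a * v2 x in
  (* same domain *)
  (forall psi phi : R -> R[i], W21 psi phi ->
     (domA v1 v2 a psi <-> domA v (fun _ => 0) a psi)) /\
  (* the difference on the common domain *)
  (forall psi phi : R -> R[i], W21 psi phi -> domA v1 v2 a psi ->
     {ae @lebesgue_measure R, forall x, x \in @I01 R ->
        opA v1 v2 psi phi x - opA v (fun _ => 0) psi phi x
        = opK v1 v2 a psi x}) /\
  (* the difference operator is bounded on L_2 *)
  (exists c : R, forall f, L2 f ->
     L2 (opK v1 v2 a f) /\ l2norm (opK v1 v2 a f) <= c * l2norm f) /\
  (* self-adjoint *)
  (forall f g, L2 f -> L2 g -> ip (opK v1 v2 a f) g = ip f (opK v1 v2 a g)) /\
  (* rank at most 2 *)
  (exists u1 u2 : R -> R[i], forall f, L2 f ->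
     exists c1 c2 : R[i], forall x, opK v1 v2 a f x = c1 * u1 x + c2 * u2 x).
Proof.
move=> h1 h2 _ v.
have hv : forall f, L2 f -> ip f v = ip f v1 + conjc (expi a) * ip f v2.
  by move=> f hf; rewrite /v ipDr.
pose k1 := fun f => 'i%C / 2%:R * conjc (expi a) * ip f v2.
pose k2 := fun f => - ('i%C / 2%:R) * expi a * ip f v1.
have hK : forall f, opK v1 v2 a f = fun x => k1 f * v1 x + k2 f * v2 x.
  by move=> f; apply/funext => x; rewrite /opK /k1 /k2; ring.
split.
  move=> psi phi hW; have hp := W21_L2 hW.
  rewrite /domA ip0 (hv psi hp).
  have key : expi a * (psi 0 - 'i%C * (ip psi v1 + conjc (expi a) * ip psi v2))
      = expi a * (psi 0 - 'i%C * ip psi v1) - 'i%C * ip psi v2.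
    apply/eqP; rewrite -subr_eq0; apply/eqP.
    transitivity ((1 - expi a * conjc (expi a)) * ('i%C * ip psi v2)); first ring.
    by rewrite expiJ subrr mul0r.
  rewrite key mulr0 addr0; split => H; [rewrite -H | rewrite H]; ring.
split.
  move=> psi phi hW H; have hp := W21_L2 hW.
  apply: aeW => x _.
  move: H; rewrite /domA /opA /opK ip0 (hv psi hp) => H.
  have H1 : psi 1 = expi a * (psi 0 - 'i%C * ip psi v1) - 'i%C * ip psi v2 by rewrite -H; ring.
  rewrite H1 /v; cbv beta.
  apply/eqP; rewrite -subr_eq0; apply/eqP.
  transitivity ((expi a * conjc (expi a) - 1) * (v2 x * ('i%C / 2%:R) * ip psi v2)); first by field.
  by rewrite expiJ subrr mul0r.
split.
  exists (Num.sqrt (2 * (Nt v1 * Nt v2))).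
  move=> f hf; rewrite hK.
  have [hL hN] := L2_lin (k1 f) (k2 f) h1 h2.
  split => //.
  have N0 : 0 <= 2 * (Nt v1 * Nt v2) by rewrite mulr_ge0 // mulr_ge0 // Nt_ge0.
  have N1 : 0 <= 2 * (Nt v1 * Nt v2) * Nt f by rewrite mulr_ge0 // Nt_ge0.
  rewrite /l2norm !Nt_ip -sqrtrM //.
  rewrite ler_sqrt //.
  apply: le_trans hN _.
  have c1 : nc (k1 f) <= 4^-1 * (2 * (Nt f * Nt v2)).
    rewrite /k1 (ncM _ (ip f v2)) (ncM _ (conjc _)) nc_i2 nc_J nc_expi mulr1; apply: ler_wpM2l => //; exact: ip_cs.
  have c2 : nc (k2 f) <= 4^-1 * (2 * (Nt f * Nt v1)).
    rewrite /k2 (ncM _ (ip f v1)) (ncM _ (expi a)) ncN nc_i2 nc_expi mulr1; apply: ler_wpM2l => //; exact: ip_cs.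
  have := Nt_ge0 v1; have := Nt_ge0 v2; have := Nt_ge0 f.
  have := nc_ge0 (k1 f); have := nc_ge0 (k2 f).
  nra.
split.
  move=> f g hf hg; rewrite !hK ipDl // ipDr2 // /k1 /k2 !(cjM, cjN, cj_i, cj_2, conjcK).
  rewrite !ip_conj //; by field.
exists v1, v2 => f hf; exists (k1 f), (k2 f) => x; by rewrite hK.
Qed.
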